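(* Let $L$ be a distributive lattice and let $a,b\in L$ with $a<b$. Then $$\max\{\aleph_0,|[a,b]_L|\}\le\operatorname{dens}\big([\delta_a,\delta_b]_{\mathrm{FBL}\langle L\rangle}\big)\le\max\{\aleph_0,|L|\},$$ where $[a,b]_L=\{x\in L:a\le x\le b\}$ and $[\delta_a,\delta_b]_{\mathrm{FBL}\langle L\rangle}=\{f\in\mathrm{FBL}\langle L\rangle:\delta_a\le f\le\delta_b\}$ (with the norm topology).
   Context: $L^*$ is the set of all lattice homomorphisms $x^*:L\to[-1,1]$; for $x\in L$, $\delta_x:L^*\to\mathbb R$ is $\delta_x(x^* )=x^*(x)$. A function $f:L^*\to\mathbb R$ is positively homogeneous if $f(\lambda x^* )=\lambda f(x^* )$ whenever $\lambda\ge0$ and $\lambda x^*\in L^*$; for such $f$, $\|f\|=\sup\{\sum_{i=1}^m|f(x_i^* )|: m\in\mathbb N,\ x_i^*\in L^*,\ \sup_{x\in L}\sum_{i=1}^m|x_i^*(x)|\le1\}$. $\mathrm{FBL}\langle L\rangle$ is the norm closure of the vector sublattice generated by $\{\delta_x:x\in L\}$ inside the Banach lattice of positively homogeneous functions on $L^*$ with finite norm, with pointwise order and operations. The density character $\operatorname{dens}(S)$ is the least cardinality of a dense subset of $S$. *)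

(* Defs.v *)
From HB Require Import structures.
From mathcomp Require Import all_boot all_order all_algebra.
From mathcomp Require Import all_classical all_reals.
Set Implicit Arguments. Unset Strict Implicit. Unset Printing Implicit Defensive.
Import Order.TTheory GRing.Theory Num.Theory.
Local Open Scope ring_scope.
Local Open Scope classical_set_scope.

Section FBL.
Context {d : Order.disp_t} (L : distrLatticeType d) (R : realType).

Definition is_LstarB (xs : L -> R) : Prop :=
  (forall x, -1 <= xs x <= 1) /\
  (forall x y, xs (Order.meet x y) = Num.min (xs x) (xs y)) /\
  (forall x y, xs (Order.join x y) = Num.max (xs x) (xs y)).

Definition Lstar := {xs : L -> R | is_LstarB xs}.

Definition delta (x : L) : Lstar -> R := fun xs => sval xs x.

Definition pos_homogeneous (f : Lstar -> R) : Prop :=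
  forall (xs ys : Lstar) (lam : R), 0 <= lam ->
    (forall x, sval ys x = lam * sval xs x) -> f ys = lam * f xs.

Definition norm_set (f : Lstar -> R) : set R :=
  [set r | exists (m : nat) (xs : 'I_m -> Lstar),
     (forall x : L, \sum_(i < m) `|sval (xs i) x| <= 1) /\
     r = \sum_(i < m) `|f (xs i)|].

Definition finite_norm (f : Lstar -> R) : Prop := has_ubound (norm_set f).

Definition fnorm (f : Lstar -> R) : R := sup (norm_set f).

Inductive gen_sublattice : (Lstar -> R) -> Prop :=
| gs_delta x : gen_sublattice (delta x)
| gs_add f g : gen_sublattice f -> gen_sublattice g ->
               gen_sublattice (fun s => f s + g s)
| gs_scale (c : R) f : gen_sublattice f -> gen_sublattice (fun s => c * f s)
| gs_max f g : gen_sublattice f -> gen_sublattice g ->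
               gen_sublattice (fun s => Num.max (f s) (g s)).

Definition FBL : set (Lstar -> R) :=
  [set f | pos_homogeneous f /\ finite_norm f /\
     forall eps : R, 0 < eps ->
       exists g, gen_sublattice g /\ fnorm (fun s => f s - g s) < eps].

Definition FBL_interval (a b : L) : set (Lstar -> R) :=
  [set f | FBL f /\ forall s, delta a s <= f s <= delta b s].

Definition dense_subset (S D : set (Lstar -> R)) : Prop :=
  D `<=` S /\
  forall f, S f -> forall eps : R, 0 < eps ->
    exists g, D g /\ fnorm (fun s => f s - g s) < eps.

End FBL.

(* Main.v *)
Require Import Defs.
From HB Require Import structures.
From mathcomp Require Import all_boot all_order all_algebra.
From mathcomp Require Import all_classical all_reals.
From mathcomp Require Import lra ring.
Import Order.TTheory GRing.Theory Num.Theory.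
Set Implicit Arguments. Unset Strict Implicit. Unset Printing Implicit Defensive.
Local Open Scope classical_set_scope.

Definition pick_or (X Y : Type) (P : X -> Y -> Prop) (d : X -> Y) (x : X) : Y :=
  match pselect (exists y, P x y) with
  | left H => proj1_sig (cid H) | right _ => d x end.

Lemma pick_orP (X Y : Type) (P : X -> Y -> Prop) (d : X -> Y) (x : X) :
  (exists y, P x y) -> P x (pick_or P d x).
Proof.
move=> H; rewrite /pick_or; case: pselect => [H'|//].
exact: (proj2_sig (cid H')).
Qed.

Lemma compar (X : Type) (S T : set X) :
  (exists f : X -> X, (forall x, S x -> T (f x)) /\
     (forall x y, S x -> S y -> f x = f y -> x = y)) \/
  (exists f : X -> X, (forall x, T x -> S (f x)) /\
     (forall x y, T x -> T y -> f x = f y -> x = y)).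
Proof.
pose P (h : set (X * X)) := (forall p, h p -> S p.1 /\ T p.2) /\
  (forall x y y', h (x, y) -> h (x, y') -> y = y') /\
  (forall x x' y, h (x, y) -> h (x', y) -> x = x').
have [h [[hST [hfun hinj]] hmax]] : exists A, P A /\ forall B, A `<` B -> ~ P B.
  apply: Zorn_bigcup => F FP Ftot; split; [|split].
  - by move=> p [h Fh hp]; exact: (FP h Fh).1 p hp.
  - move=> x y y' [h1 F1 h1p] [h2 F2 h2p].
    case: (Ftot h1 h2 F1 F2) => sub.
      exact: (FP h2 F2).2.1 x y y' (sub _ h1p) h2p.
    exact: (FP h1 F1).2.1 x y y' h1p (sub _ h2p).
  - move=> x x' y [h1 F1 h1p] [h2 F2 h2p].
    case: (Ftot h1 h2 F1 F2) => sub.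
      exact: (FP h2 F2).2.2 x x' y (sub _ h1p) h2p.
    exact: (FP h1 F1).2.2 x x' y h1p (sub _ h2p).
case: (pselect (forall x, S x -> exists y, h (x, y))) => [Hdom|Hndom].
  left; exists (pick_or (fun x y => h (x, y)) id); split.
    move=> x Sx; have := @pick_orP _ _ (fun x y => h (x, y)) id x (Hdom x Sx) => /= /hST [].
    by [].
  move=> x y Sx Sy e.
  have hx := @pick_orP _ _ (fun x y => h (x, y)) id x (Hdom x Sx); have hy := @pick_orP _ _ (fun x y => h (x, y)) id y (Hdom y Sy).
  rewrite e in hx; exact: hinj _ _ _ hx hy.
have [x0 [Sx0 nx0]] : exists x0, S x0 /\ ~ exists y, h (x0, y).
  case: (pselect (exists x0, S x0 /\ ~ exists y, h (x0, y))) => // H.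
  case: Hndom => x Sx; case: (pselect (exists y, h (x, y))) => // H2.
  by case: H; exists x.
have Hran : forall y, T y -> exists x, h (x, y).
  move=> y Ty; case: (pselect (exists x, h (x, y))) => // nh; exfalso.
  have P' : P (h `|` [set (x0, y)]).
    split; [|split].
    - by move=> p [/hST //|->].
    - move=> x z z' [h1|E1] [h2|E2].
      + exact: hfun h1 h2.
      + by case: E2 h1 => -> -> h1; case: nx0; exists z.
      + by case: E1 h2 => -> -> h2; case: nx0; exists z'.
      + by case: E1 E2 => -> -> [->].
    - move=> x x' z [h1|E1] [h2|E2].
      + exact: hinj h1 h2.
      + by case: E2 h1 => -> -> h1; case: nh; exists x.
      + by case: E1 h2 => -> -> h2; case: nh; exists x'.
      + by case: E1 E2 => -> -> [->].
  apply: (hmax _ _ P'); split; first by move=> p hp; left.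
  by move=> /(_ (x0, y)) H; case: nx0; exists y; apply: H; right.
right; exists (pick_or (fun y x => h (x, y)) id); split.
  move=> y Ty; have := @pick_orP _ _ (fun y x => h (x, y)) id y (Hran y Ty) => /= /hST [].
  by [].
move=> x y Tx Ty e.
have hx := @pick_orP _ _ (fun y x => h (x, y)) id x (Hran x Tx); have hy := @pick_orP _ _ (fun y x => h (x, y)) id y (Hran y Ty).
rewrite e in hx; exact: hfun _ _ _ hx hy.
Qed.

Lemma hess (X : Type) (e : nat -> X) (he : injective e) :
  exists p : X * X -> X, injective p.
Proof.
pose T := (X + ((X * X) * X))%type.
pose P (Z : set T) :=
  (Z !=set0 -> [set t | (exists i, t = inl (e i)) \/
      (exists i j, t = inr ((e i, e j), e (pickle (i, j))))] `<=` Z) /\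
  (forall u v z, Z (inr ((u, v), z)) -> Z (inl u) /\ Z (inl v) /\ Z (inl z)) /\
  (forall p z z', Z (inr (p, z)) -> Z (inr (p, z')) -> z = z') /\
  (forall p p' z, Z (inr (p, z)) -> Z (inr (p', z)) -> p = p') /\
  (forall u v, Z (inl u) -> Z (inl v) -> exists z, Z (inr ((u, v), z))).
pose Z0 : set T := [set t | (exists i, t = inl (e i)) \/
      (exists i j, t = inr ((e i, e j), e (pickle (i, j))))].
have PZ0 : P Z0.
  rewrite /P; split; [by move=> _ t|split; [|split; [|split]]].
  - move=> u v z [[i //]|[i [j [-> -> ->]]]].
    by split; [|split]; left; [exists i|exists j|exists (pickle (i, j))].
  - move=> p z z' [[i //]|[i [j [E1 E2]]]] [[i' //]|[i' [j' [E1' E2']]]].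
    rewrite E1 in E1'; case: E1' => /he Ei /he Ej.
    by rewrite E2 E2' Ei Ej.
  - move=> p p' z [[i //]|[i [j [E1 E2]]]] [[i' //]|[i' [j' [E1' E2']]]].
    rewrite E2 in E2'; move/he/(pcan_inj pickleK): E2' => [Ei Ej].
    by rewrite E1 E1' Ei Ej.
  - move=> u v [[i [->]]|[i [j //]]] [[j [->]]|[i' [j' //]]].
    by exists (e (pickle (i, j))); right; exists i, j.
have [Z [[Z0Z [Zc [Zf [Zi Ztot]]]] Zmax]] : exists Z, P Z /\ forall B, Z `<` B -> ~ P B.
  apply: Zorn_bigcup => F FP Ftot; split; [|split; [|split; [|split]]].
  - by move=> [t [Y FY Yt]] s Hs; exists Y => //; apply: (FP Y FY).1 => //; exists t.
  - move=> u v z [Y FY Yt]; have [h1 [h2 h3]] := (FP Y FY).2.1 _ _ _ Yt.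
    by split; [|split]; exists Y.
  - move=> p z z' [Y1 F1 Y1t] [Y2 F2 Y2t]; case: (Ftot Y1 Y2 F1 F2) => sub.
      exact: (FP Y2 F2).2.2.1 _ _ _ (sub _ Y1t) Y2t.
    exact: (FP Y1 F1).2.2.1 _ _ _ Y1t (sub _ Y2t).
  - move=> p p' z [Y1 F1 Y1t] [Y2 F2 Y2t]; case: (Ftot Y1 Y2 F1 F2) => sub.
      exact: (FP Y2 F2).2.2.2.1 _ _ _ (sub _ Y1t) Y2t.
    exact: (FP Y1 F1).2.2.2.1 _ _ _ Y1t (sub _ Y2t).
  - move=> u v [Y1 F1 Y1t] [Y2 F2 Y2t]; case: (Ftot Y1 Y2 F1 F2) => sub.
      have [z Hz] := (FP Y2 F2).2.2.2.2 _ _ (sub _ Y1t) Y2t.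
      by exists z; exists Y2.
    have [z Hz] := (FP Y1 F1).2.2.2.2 _ _ Y1t (sub _ Y2t).
    by exists z; exists Y1.
have Z0sub : Z0 `<=` Z.
  case: (pselect (Z !=set0)) => [/Z0Z //|nZ].
  exfalso; apply: (Zmax Z0) => //; split.
    by move=> t Zt; case: nZ; exists t.
  move=> /(_ (inl (e 0))) H; case: nZ; exists (inl (e 0)); apply: H.
  by left; exists 0.
pose A := fun x => Z (inl x).
have Ae : forall i, A (e i) by move=> i; apply: (Z0sub); left; exists i.
pose g := pick_or (fun p z => Z (inr (p, z))) fst.
have gP : forall u v, A u -> A v -> Z (inr ((u, v), g (u, v))).
  move=> u v Au Av; exact: (@pick_orP _ _ (fun p z => Z (inr (p, z))) fst (u, v) (Ztot u v Au Av)).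
have gA : forall u v, A u -> A v -> A (g (u, v)).
  by move=> u v Au Av; have [_ [_ ]] := Zc _ _ _ (gP u v Au Av).
have ginj : forall u v u' v', A u -> A v -> A u' -> A v' ->
    g (u, v) = g (u', v') -> u = u' /\ v = v'.
  move=> u v u' v' Au Av Au' Av' E.
  have := gP _ _ Au Av; rewrite E => H.
  by case: (Zi _ _ _ H (gP _ _ Au' Av')) => -> ->.
have e01 : e 0 <> e 1 by move/he.
have e02 : e 0 <> e 2 by move/he.
have e12 : e 1 <> e 2 by move/he.
case: (compar (~` A) A) => [[f [fA finj]]|[phi [phiA phiinj]]].
  pose r x := if pselect (A x) then g (e 0, x) else g (e 1, f x).
  have rA : forall x, A (r x).
    by move=> x; rewrite /r; case: pselect => Ax; apply: (gA) => //; apply: (fA).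
  have rinj : injective r.
    move=> x y; rewrite /r.
    case: pselect => Ax; case: pselect => Ay E.
    - by case: (ginj _ _ _ _ (Ae 0) Ax (Ae 0) Ay E).
    - by case: (ginj _ _ _ _ (Ae 0) Ax (Ae 1) (fA _ Ay) E).
    - by case: (ginj _ _ _ _ (Ae 1) (fA _ Ax) (Ae 0) Ay E) => /esym.
    - case: (ginj _ _ _ _ (Ae 1) (fA _ Ax) (Ae 1) (fA _ Ay) E) => _.
      exact: finj.
  exists (fun p => g (r p.1, r p.2)) => [[x y] [x' y']] /= E.
  by case: (ginj _ _ _ _ (rA x) (rA y) (rA x') (rA y') E) => /rinj -> /rinj ->.
exfalso.
pose B y := exists2 a, A a & y = phi a.
have BnA : forall y, B y -> ~ A y by move=> y [a Aa ->]; apply: (phiA).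
pose psi w := if pselect (A w) then w
  else pick_or (fun w a => A a /\ w = phi a) id w.
have psiB : forall w, B w -> A (psi w) /\ w = phi (psi w).
  move=> w Bw; rewrite /psi; destruct (pselect (A w)) as [Aw|nAw]; first by case: (BnA _ Bw).
  apply: (@pick_orP _ _ (fun w a => A a /\ w = phi a) id w).
  by case: Bw => a Aa E; exists a.
have psiA : forall w, A w -> psi w = w by move=> w Aw; rewrite /psi; destruct (pselect (A w)).
have psiAB : forall w, A w \/ B w -> A (psi w).
  by move=> w [Aw|Bw]; [rewrite psiA|case: (psiB _ Bw)].
pose tag u v := if pselect (A u) then e 0 else if pselect (A v) then e 1 else e 2.
have tagA : forall u v, A (tag u v).
  by move=> u v; rewrite /tag; destruct (pselect (A u)); [|destruct (pselect (A v))]; apply: (Ae).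
have tag_eq : forall u v u' v', tag u v = tag u' v' ->
    (A u <-> A u') /\ (~ A u -> (A v <-> A v')).
  move=> u v u' v'; rewrite /tag.
  destruct (pselect (A u)) as [Au|Au]; destruct (pselect (A u')) as [Au'|Au'];
  destruct (pselect (A v)) as [Av|Av]; destruct (pselect (A v')) as [Av'|Av'];
  simpl => E; try tauto;
  exfalso; first [exact: (e01 E) | exact: (e01 (esym E)) | exact: (e02 E) |
    exact: (e02 (esym E)) | exact: (e12 E) | exact: (e12 (esym E))].
pose NT (q : (X * X) * X) := (A q.1.1 \/ B q.1.1) /\ (A q.1.2 \/ B q.1.2) /\
  ~ (A q.1.1 /\ A q.1.2) /\
  q.2 = phi (g (tag q.1.1 q.1.2, g (psi q.1.1, psi q.1.2))).
pose Z' : set T := [set t | Z t \/ (exists y, t = inl y /\ B y) \/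
  (exists q, t = inr q /\ NT q)].
have Z'l : forall y, Z' (inl y) -> A y \/ B y.
  by move=> y [Zy|[[y' [[->]]]|[q []]]] //; [left|right].
have Z'r : forall p z, Z' (inr (p, z)) -> Z (inr (p, z)) \/ NT (p, z).
  by move=> p z [Zy|[[y' []]|[q [[->]]]]] //; [left|right].
have NTB : forall p z, NT (p, z) -> B z.
  move=> [u v] z [ABu [ABv [_ /= ->]]].
  exists (g (tag u v, g (psi u, psi v))); last by [].
  apply: (gA); first exact: (tagA).
  by apply: (gA); apply: (psiAB).
have psi_inj : forall u u', (A u <-> A u') -> A u \/ B u -> A u' \/ B u' ->
    psi u = psi u' -> u = u'.
  move=> u u' Eq ABu ABu'.
  case: (pselect (A u)) => Au.
    have Au' : A u' by apply/Eq.
    by rewrite !psiA.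
  have Au' : ~ A u' by move/Eq.
  case: ABu => // Bu; case: ABu' => // Bu' E.
  by rewrite (psiB _ Bu).2 (psiB _ Bu').2 E.
have PZ' : P Z'.
  split; [|split; [|split; [|split]]].
  - move=> _ t Ht; left; exact: Z0sub.
  - move=> u v z /Z'r [Zt|NTt].
      by have [h1 [h2 h3]] := Zc _ _ _ Zt; split; [|split]; left.
    have Bz := NTB _ _ NTt; case: NTt => [ABu [ABv _]].
    split; [|split].
    + by case: ABu => [Au|Bu]; [left|right; left; exists u].
    + by case: ABv => [Av|Bv]; [left|right; left; exists v].
    + by right; left; exists z.
  - move=> [u v] z z' /Z'r [Zt|NTt] /Z'r [Zt'|NTt'].
    + exact: Zf Zt Zt'.
    + by case: NTt' => _ [_ [[]]]; have [h1 [h2 _]] := Zc _ _ _ Zt.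
    + by case: NTt => _ [_ [[]]]; have [h1 [h2 _]] := Zc _ _ _ Zt'.
    + by case: NTt => _ [_ [_ /= ->]]; case: NTt' => _ [_ [_ /= ->]].
  - move=> [u v] [u' v'] z /Z'r [Zt|NTt] /Z'r [Zt'|NTt'].
    + exact: Zi Zt Zt'.
    + by have [_ [_ Az]] := Zc _ _ _ Zt; case: (BnA _ (NTB _ _ NTt') Az).
    + by have [_ [_ Az]] := Zc _ _ _ Zt'; case: (BnA _ (NTB _ _ NTt) Az).
    + have ABu := NTt.1; have ABv := NTt.2.1; have nuv := NTt.2.2.1.
      have ABu' := NTt'.1; have ABv' := NTt'.2.1; have nuv' := NTt'.2.2.1.
      have E1 := NTt.2.2.2; have E2 := NTt'.2.2.2; simpl in *.
      rewrite E1 in E2.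
      have gA1 : A (g (tag u v, g (psi u, psi v))).
        by apply: (gA); [apply: (tagA)|apply: (gA); apply: (psiAB)].
      have gA2 : A (g (tag u' v', g (psi u', psi v'))).
        by apply: (gA); [apply: (tagA)|apply: (gA); apply: (psiAB)].
      have := phiinj _ _ gA1 gA2 E2.
      move=> /(ginj _ _ _ _ (tagA _ _) (gA _ _ (psiAB _ ABu) (psiAB _ ABv))
                 (tagA _ _) (gA _ _ (psiAB _ ABu') (psiAB _ ABv'))) [Et Eg].
      have [Ep1 Ep2] := ginj _ _ _ _ (psiAB _ ABu) (psiAB _ ABv)
         (psiAB _ ABu') (psiAB _ ABv') Eg.
      have [Eu Ev] := tag_eq _ _ _ _ Et.
      case: (pselect (A u)) => Au.
        have Au' : A u' by apply/Eu.
        have nAv : ~ A v by move=> Av; apply: nuv.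
        have nAv' : ~ A v' by move=> Av'; apply: nuv'.
        congr pair; first by rewrite -(psiA _ Au) -(psiA _ Au').
        by apply: psi_inj => //; split=> // /nAv.
      have Euv := Ev Au.
      congr pair; first by apply: psi_inj.
      by apply: psi_inj.
  - move=> u v /Z'l ABu /Z'l ABv.
    case: (pselect (A u /\ A v)) => [[Au Av]|nuv].
      by have [z Hz] := Ztot u v Au Av; exists z; left.
    exists (phi (g (tag u v, g (psi u, psi v)))); right; right.
    by exists ((u, v), phi (g (tag u v, g (psi u, psi v)))).
apply: (Zmax Z') => //; split; first by move=> t Zt; left.
move=> /(_ (inl (phi (e 0)))) H.
have : A (phi (e 0)).
  by apply: H; right; left; exists (phi (e 0)); split => //; exists (e 0).
exact: (phiA) (Ae 0).
Qed.

Local Open Scope card_scope.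

Lemma seq_inj (Y : Type) (e : nat -> Y) (he : injective e) :
  exists c : seq Y -> Y, injective c.
Proof.
have [p pinj] := hess he.
pose c := fix c (s : seq Y) := match s with
  | [::] => p (e 0, e 0) | x :: s' => p (e 1, p (x, c s')) end.
exists c; elim=> [|x s IH] [|y t] //=.
- by move/pinj => [] /he.
- by move/pinj => [] /he.
- by move/pinj => [] /pinj [-> /IH ->].
Qed.

Lemma inj_le T U (f : T -> U) : injective f -> [set: T] #<= [set: U].
Proof.
move=> fi.
have : $|{injfun [set: T] >-> [set: U]}|.
  by apply/injfunPex; exists f => // x y _ _; apply: fi.
by case=> g; apply: inj_card_le.
Qed.

Lemma seq_le (L : Type) : [set: seq (L + nat)%type] #<= [set: (L + nat)%type].
Proof.
have [c ci] := @seq_inj (L + nat)%type inr (fun x y => @inr_inj _ _ x y).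
exact: inj_le ci.
Qed.

Local Open Scope ring_scope.
Local Open Scope classical_set_scope.
Local Open Scope card_scope.

Section RealLemmas.
Variable R : realType.
Implicit Types x y z u v a b : R.

Lemma nb x : x <= `|x| /\ - x <= `|x|.
Proof. by split; [exact: ler_norm|rewrite -normrN; exact: ler_norm]. Qed.

Lemma max_lip a b c d : `|Num.max a b - Num.max c d| <= `|a - c| + `|b - d|.
Proof.
have [h1 h2] := nb (a - c); have [h3 h4] := nb (b - d).
rewrite ler_norml; case: (lerP a b) => ?; case: (lerP c d) => ?; apply/andP; split; lra.
Qed.

Lemma max_abs a b : `|Num.max a b| <= `|a| + `|b|.
Proof.
have [h1 h2] := nb a; have [h3 h4] := nb b.
rewrite ler_norml; case: (lerP a b) => ?; apply/andP; split; lra.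
Qed.

Lemma clamp_lip al be x y : al <= y <= be ->
  `|y - Num.max al (Num.min x be)| <= `|y - x|.
Proof.
move=> /andP [h1 h2]; have [h3 h4] := nb (y - x).
rewrite ler_norml; case: (lerP x be) => ?; case: (lerP al x) => ?;
  try case: (lerP al be) => ?; apply/andP; split; lra.
Qed.

End RealLemmas.

Section Basics.
Context {d : Order.disp_t} (L : distrLatticeType d) (R : realType).
Local Notation F := (Lstar L R -> R).

Lemma Lbound (s : Lstar L R) x : `|sval s x| <= 1.
Proof. by case: s => f [hb _] /=; rewrite ler_norml; exact: hb. Qed.

Definition zeroL : Lstar L R.
Proof.
exists (fun _ => 0); split; first by move=> x; rewrite lerN10 ler01.
by split=> x y; rewrite ?minxx ?maxxx.
Defined.

Lemma norm_set0 (h : F) : norm_set h 0.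
Proof.
exists 0%N, (fun _ => zeroL); split; first by move=> x; rewrite big_ord0.
by rewrite big_ord0.
Qed.

Lemma norm_elem (h : F) s : norm_set h `|h s|.
Proof.
exists 1%N, (fun _ => s); split; first by move=> x; rewrite big_ord1 Lbound.
by rewrite big_ord1.
Qed.

Lemma ub_core (h h1 h2 : F) c1 c2 M1 M2 : 0 <= c1 -> 0 <= c2 ->
  (forall s, `|h s| <= c1 * `|h1 s| + c2 * `|h2 s|) ->
  ubound (norm_set h1) M1 -> ubound (norm_set h2) M2 ->
  ubound (norm_set h) (c1 * M1 + c2 * M2).
Proof.
move=> c1p c2p H u1 u2 r [m [xs [Hxs ->]]].
apply: (le_trans (ler_sum _ (fun i _ => H (xs i)))).
rewrite big_split /= -!mulr_sumr.
apply: lerD; apply: ler_wpM2l => //; [apply: u1|apply: u2]; by exists m, xs.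
Qed.

Lemma ub_weak (E : set R) M M' : ubound E M -> M <= M' -> ubound E M'.
Proof. by move=> u le r /u h; exact: le_trans le. Qed.

Lemma fin_ub (h : F) : finite_norm h -> ubound (norm_set h) (fnorm h).
Proof. by move=> hf; apply: sup_upper_bound; split=> //; exists 0; apply: norm_set0. Qed.

Lemma fnorm_le (h : F) M : ubound (norm_set h) M -> fnorm h <= M.
Proof. by move=> u; apply: ge_sup => //; exists 0; apply: norm_set0. Qed.

Lemma abs_le_fnorm (h : F) s : finite_norm h -> `|h s| <= fnorm h.
Proof. by move=> /fin_ub u; apply: u; apply: norm_elem. Qed.

Lemma fin_of_ub (h : F) M : ubound (norm_set h) M -> finite_norm h.
Proof. by move=> u; exists M. Qed.

Lemma fin_sub (f g : F) : finite_norm f -> finite_norm g ->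
  finite_norm (fun s => f s - g s).
Proof.
move=> /fin_ub uf /fin_ub ug; apply: (fin_of_ub (ub_core (h1:=f) (h2:=g) ler01 ler01 _ uf ug)).
by move=> s; rewrite !mul1r ler_normB.
Qed.

Lemma gen_fin (g : F) : gen_sublattice g -> finite_norm g.
Proof.
elim=> {g} [x|f g _ /fin_ub uf _ /fin_ub ug|c f _ /fin_ub uf|f g _ /fin_ub uf _ /fin_ub ug].
- exists 1 => r [m [xs [Hxs ->]]]; exact: Hxs.
- apply: (fin_of_ub (ub_core (h1:=f) (h2:=g) ler01 ler01 _ uf ug)).
  by move=> s; rewrite !mul1r ler_normD.
- apply: (fin_of_ub (ub_core (h1:=f) (h2:=f) (normr_ge0 c) (lexx 0) _ uf uf)).
  by move=> s; rewrite mul0r addr0 normrM.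
- apply: (fin_of_ub (ub_core (h1:=f) (h2:=g) ler01 ler01 _ uf ug)).
  by move=> s; rewrite !mul1r max_abs.
Qed.

Lemma gen_hom (g : F) : gen_sublattice g -> pos_homogeneous g.
Proof.
elim=> {g} [x|f g _ hf _ hg|c f _ hf|f g _ hf _ hg] xs ys lam l0 H.
- exact: H.
- by rewrite (hf _ _ _ l0 H) (hg _ _ _ l0 H) mulrDr.
- by rewrite (hf _ _ _ l0 H) mulrCA.
- by rewrite (hf _ _ _ l0 H) (hg _ _ _ l0 H) maxr_pMr.
Qed.

Lemma gen_FBL (g : F) : gen_sublattice g -> FBL g.
Proof.
move=> gg; split; [exact: gen_hom|split; first exact: gen_fin].
move=> eps e0; exists g; split=> //.
apply: (le_lt_trans _ e0); apply: fnorm_le => r [m [xs [_ ->]]].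
by rewrite big1 // => i _; rewrite subrr normr0.
Qed.

Lemma FBL_fin (f : F) : FBL f -> finite_norm f.
Proof. by case=> _ []. Qed.

Lemma close (f g : F) r s : finite_norm f -> finite_norm g ->
  fnorm (fun s => f s - g s) < r -> `|f s - g s| < r.
Proof.
move=> ff fg H; apply: le_lt_trans H.
exact (@abs_le_fnorm (fun s => f s - g s) s (fin_sub ff fg)).
Qed.

Lemma mono (s : Lstar L R) (x y : L) : (x <= y)%O -> sval s x <= sval s y.
Proof.
case: s => h [_ [hm _]] /= /meet_idPl E.
by rewrite -E hm ge_min lexx orbT.
Qed.

End Basics.

Lemma minb (R : realType) (b1 b2 : bool) :
  Num.min (b1%:R : R) b2%:R = (b1 && b2)%:R.
Proof. case: b1; case: b2 => /=. 
- by rewrite minxx.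
- by rewrite min_r // ler01.
- by rewrite min_l // ler01.
- by rewrite minxx.
Qed.
Lemma maxb (R : realType) (b1 b2 : bool) :
  Num.max (b1%:R : R) b2%:R = (b1 || b2)%:R.
Proof. case: b1; case: b2 => /=. 
- by rewrite maxxx.
- by rewrite max_l // ler01.
- by rewrite max_r // ler01.
- by rewrite maxxx.
Qed.

Section Sep.
Context {d : Order.disp_t} (L : distrLatticeType d) (R : realType).

Lemma sep (x y : L) : ~ (x <= y)%O ->
  exists s : Lstar L R, sval s x = 1 /\ sval s y = 0.
Proof.
move=> nxy.
pose P (F : set L) := (forall u v, F u -> (u <= v)%O -> F v) /\
  (forall u v, F u -> F v -> F (Order.meet u v)) /\ ~ F y /\ (F !=set0 -> F x).
have [Fm [[Fup [Fmeet [Fy Fx]]] Fmax]] : exists A, P A /\ forall B, A `<` B -> ~ P B.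
  apply: Zorn_bigcup => C CP Ctot; split; [|split; [|split]].
  - move=> u v [Y CY Yu] uv; exists Y => //; exact: (CP Y CY).1 u v Yu uv.
  - move=> u v [Y1 C1 Y1u] [Y2 C2 Y2v]; case: (Ctot Y1 Y2 C1 C2) => sub.
      by exists Y2 => //; apply: (CP Y2 C2).2.1 => //; apply: sub.
    by exists Y1 => //; apply: (CP Y1 C1).2.1 => //; apply: sub.
  - by move=> [Y CY Yy]; apply: (CP Y CY).2.2.1.
  - move=> [t [Y CY Yt]]; exists Y => //; apply: (CP Y CY).2.2.2; by exists t.
have Fmx : Fm x.
  apply: Fx; case: (pselect (Fm !=set0)) => // nF; exfalso.
  apply: (Fmax [set z | (x <= z)%O]).
    split; first by move=> t Ft; case: nF; exists t.
    by move=> /(_ x (lexx x)) Fx'; case: nF; exists x.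
  split; [|split; [|split]].
  - by move=> u v /= xu uv; apply: le_trans uv.
  - by move=> u v /= xu xv; rewrite lexI xu xv.
  - by [].
  - by move=> _ /=.
have ext : forall u, ~ Fm u -> exists2 f, Fm f & (Order.meet f u <= y)%O.
  move=> u nu; case: (pselect (exists2 f, Fm f & (Order.meet f u <= y)%O)) => // H.
  exfalso; apply: (Fmax [set z | exists2 f, Fm f & (Order.meet f u <= z)%O]).
    split; first by move=> f Ff; exists f => //; exact: leIl.
    by move=> /(_ u) H2; apply: nu; apply: H2; exists x => //; exact: leIr.
  split; [|split; [|split]].
  - by move=> w v [f Ff fw] wv; exists f => //; apply: le_trans wv.
  - move=> w v [f1 F1 h1] [f2 F2 h2]; exists (Order.meet f1 f2); first exact: Fmeet.
    rewrite lexI; apply/andP; split.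
      by apply: le_trans h1; apply: leI2 => //; exact: leIl.
    by apply: le_trans h2; apply: leI2 => //; exact: leIr.
  - by [].
  - by move=> _; exists x => //; exact: leIl.
have prime : forall u v, Fm (Order.join u v) -> Fm u \/ Fm v.
  move=> u v Fuv; case: (pselect (Fm u)) => [|nu]; first by left.
  case: (pselect (Fm v)) => [|nv]; first by right.
  exfalso; have [f1 F1 h1] := ext u nu; have [f2 F2 h2] := ext v nv.
  apply: Fy; apply: (Fup (Order.meet (Order.meet f1 f2) (Order.join u v))).
    by apply: (Fmeet) => //; apply: (Fmeet).
  rewrite meetUr leUx; apply/andP; split.
    by apply: le_trans h1; apply: leI2 => //; exact: leIl.
  by apply: le_trans h2; apply: leI2 => //; exact: leIr.
pose h := fun z : L => (`[< Fm z >])%:R : R.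
have hs : is_LstarB h.
  split; [|split].
  - by move=> z; rewrite /h; case: asbool; apply/andP; split => /=; lra.
  - move=> z w; rewrite /h minb.
    have -> : `[< Fm (Order.meet z w) >] = `[< Fm z /\ Fm w >].
      apply: asbool_equiv_eq; split; last by case; apply: (Fmeet).
      by move=> Fzw; split; apply: (Fup _ _ Fzw); [exact: leIl|exact: leIr].
    by rewrite asbool_and.
  - move=> z w; rewrite /h maxb.
    have -> : `[< Fm (Order.join z w) >] = `[< Fm z \/ Fm w >].
      apply: asbool_equiv_eq; split; first exact: prime.
      by case=> H; apply: (Fup _ _ H); [exact: leUl|exact: leUr].
    by rewrite asbool_or.
exists (exist _ h hs); rewrite /= /h asboolT // asboolF //.
Qed.

End Sep.

Lemma inj_set_le T U (A : set T) (B : set U) (f : T -> U) :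
  (forall x, A x -> B (f x)) -> (forall x y, A x -> A y -> f x = f y -> x = y) ->
  A #<= B.
Proof.
move=> fAB finj.
have : $|{injfun A >-> B}|.
  apply/injfunPex; exists f; first by move=> x; apply: fAB.
  by move=> x y /set_mem Ax /set_mem Ay; apply: finj.
by case=> g; apply: inj_card_le.
Qed.

Lemma absurd_close (R : realType) (u : R) : `|1 - u| < 2^-1 -> `|0 - u| < 2^-1 -> False.
Proof. rewrite ltr_norml => /andP [? ?]; rewrite ltr_norml => /andP [? ?]; lra. Qed.

Section Part1.
Context {d : Order.disp_t} (L : distrLatticeType d) (R : realType).
Variables (a b : L).
Local Notation F := (Lstar L R -> R).

Lemma delta_in (x : L) : (a <= x <= b)%O -> FBL_interval a b (delta (R:=R) x).
Proof.
move=> /andP [ax xb]; split; first by apply: gen_FBL; apply: gs_delta.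
by move=> s; rewrite /delta; apply/andP; split; apply: mono.
Qed.

Lemma Ft_in (t : R) : (a <= b)%O -> 0 <= t <= 1 ->
  FBL_interval a b (fun s => (1 - t) * delta a s + t * delta b s).
Proof.
move=> ab /andP [t0 t1]; split.
  apply: gen_FBL; apply: (gs_add (f := fun s => (1 - t) * delta a s)
    (g := fun s => t * delta b s)); apply: gs_scale; apply: gs_delta.
move=> s; have := mono s ab; rewrite /delta => h; apply/andP; split; nra.
Qed.

Lemma part1 (hab : (a < b)%O) (D : set F) :
  dense_subset (FBL_interval a b) D ->
  [set: nat] #<= D /\ [set x : L | (a <= x <= b)%O] #<= D.
Proof.
move=> [DI dens].
have ab : (a <= b)%O := ltW hab.
have DF : forall g, D g -> finite_norm g.
  by move=> g /DI; rewrite /FBL_interval /= => -[+ _] => /FBL_fin.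
have IF : forall f : F, FBL_interval a b f -> finite_norm f.
  by move=> f; rewrite /FBL_interval /= => -[+ _] => /FBL_fin.
split.
  pose t (n : nat) : R := (2^-1) ^+ n.
  have tpos : forall n, 0 < t n by move=> n; apply: exprn_gt0; lra.
  have t01 : forall n, 0 <= t n <= 1.
    by move=> n; rewrite ltW ?tpos //= exprn_ile1 //; lra.
  have [G HG] := choice (fun n => dens _ (Ft_in ab (t01 n)) (t n / 8)
                           (divr_gt0 (tpos n) (ltac:(lra) : (0:R) < 8))).
  apply: (inj_set_le (f := G)) => [n _|n m _ _ E]; first by case: (HG n).
  have nba : ~ (b <= a)%O by move=> ba; move: hab; rewrite lt_neqAle => /andP [/eqP []]; apply: le_anti; rewrite ab ba.
  have [s [sb sa]] := sep R nba.
  have cl : forall k, `|t k - G k s| < t k / 8.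
    move=> k; have [Dk Hk] := HG k.
    have := close s (IF _ (Ft_in ab (t01 k))) (DF _ Dk) Hk.
    by rewrite /delta sa sb mulr0 add0r mulr1.
  have key : forall n m, (n < m)%N -> G n <> G m.
    move=> n' m' nm E'.
    have h1 := cl n'; have h2 := cl m'; rewrite -E' in h2.
    have htm : t m' <= t n' / 2.
      rewrite /t -(subnKC nm) exprD exprS.
      have : (2^-1 : R) ^+ (m' - n'.+1) <= 1 by apply: exprn_ile1; lra.
      have := tpos n'; rewrite /t => p1 p2.
      have p3 : 0 <= (2^-1 : R) ^+ (m' - n'.+1) by apply: exprn_ge0; lra.
      nra.
    have := tpos n'; have := tpos m'.
    have [a1 a2] := nb (t n' - G n' s); have [a3 a4] := nb (t m' - G n' s).
    move: h1 h2 htm; rewrite ltr_norml; lra.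
  case: (ltngtP n m) => // nm.
    by case: (key _ _ nm E).
  by case: (key _ _ nm (esym E)).
have : forall x : L, exists g : F, (a <= x <= b)%O -> D g /\
    fnorm (fun s => delta x s - g s) < 2^-1.
  move=> x; case: (pselect (a <= x <= b)%O) => [hx|nx].
    have [g [Dg Hg]] := dens _ (delta_in hx) (2^-1) (ltac:(lra) : (0:R) < 2^-1).
    by exists g.
  by exists (fun _ => 0).
move=> /choice [G HG].
apply: (inj_set_le (f := G)) => [x /= hx|x y /= hx hy E]; first by case: (HG x hx).
case: (pselect (x <= y)%O) => xy; last first.
  have [s [sx sy]] := sep R xy.
  have [Dx Hx] := HG x hx; have [Dy Hy] := HG y hy.
  have h1 := close s (IF _ (delta_in hx)) (DF _ Dx) Hx.
  have h2 := close s (IF _ (delta_in hy)) (DF _ Dy) Hy.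
  rewrite -E in h2; move: h1 h2; rewrite /delta sx sy.
  move=> h1 h2; exfalso; exact: absurd_close h1 h2.
case: (pselect (y <= x)%O) => yx; first by apply: le_anti; rewrite xy yx.
have [s [sy sx]] := sep R yx.
have [Dx Hx] := HG x hx; have [Dy Hy] := HG y hy.
have h1 := close s (IF _ (delta_in hx)) (DF _ Dx) Hx.
have h2 := close s (IF _ (delta_in hy)) (DF _ Dy) Hy.
rewrite -E in h2; move: h1 h2; rewrite /delta sx sy.
move=> h1 h2; exfalso; exact: absurd_close h2 h1.
Qed.

End Part1.

Lemma negmax (R : realType) (u v : R) : (-1) * Num.max ((-1) * u) ((-1) * v) = Num.min u v.
Proof. rewrite !mulN1r; case: (lerP u v) => ?; case: (lerP (-u) (-v)) => ?; lra. Qed.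

Lemma clamp_in (R : realType) (al be x : R) : al <= be ->
  al <= Num.max al (Num.min x be) <= be.
Proof. move=> h; case: (lerP x be) => ?; case: (lerP al x) => ?; try case: (lerP al be) => ?; apply/andP; split; lra. Qed.

Section Part2.
Context {d : Order.disp_t} (L : distrLatticeType d) (R : realType).
Local Notation F := (Lstar L R -> R).
Local Notation gen := (@gen_sublattice d L R).

Definition step (stk : seq F) (t : (L + nat)%type) : seq F :=
  match t with
  | inl x => delta x :: stk
  | inr 0%N => if stk is f :: g :: r then (fun s => g s + f s) :: r else stk
  | inr 1%N => if stk is f :: g :: r then (fun s => Num.max (g s) (f s)) :: r else stk
  | inr n.+2 => if stk is f :: r then
      (fun s => ratr (odflt 0%R (unpickle n : option rat)) * f s) :: r else stk
  end.

Definition run (w : seq (L + nat)%type) (stk : seq F) := foldl step stk w.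
Lemma run_cat w1 w2 stk : run (w1 ++ w2) stk = run w2 (run w1 stk).
Proof. exact: foldl_cat. Qed.

Definition fdecode w : F := head (fun _ => 0) (run w [::]).

Lemma approx (g : F) : gen g -> forall eps : R, 0 < eps ->
  exists w h, (forall stk, run w stk = h :: stk) /\ gen h /\
    ubound (norm_set (fun s => g s - h s)) eps.
Proof.
elim=> {g} [x|f g gf IHf gg IHg|c f gf IHf|f g gf IHf gg IHg] eps e0.
- exists [:: inl x], (delta x); split; first by [].
  split; first exact: gs_delta.
  move=> r [m [xs [_ ->]]]; rewrite big1 ?ltW // => i _; rewrite subrr normr0 //.
- have [w1 [h1 [r1 [g1 u1]]]] := IHf _ (divr_gt0 e0 (ltac:(lra) : (0:R) < 2)).
  have [w2 [h2 [r2 [g2 u2]]]] := IHg _ (divr_gt0 e0 (ltac:(lra) : (0:R) < 2)).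
  exists (w1 ++ w2 ++ [:: inr 0%N]), (fun s => h1 s + h2 s); split.
    by move=> stk; rewrite !run_cat r1 r2.
  split; first exact: gs_add.
  apply: ub_weak; first apply: (ub_core ler01 ler01 _ u1 u2).
    by move=> s; rewrite !mul1r; apply: le_trans (ler_normD _ _); rewrite le_eqVlt; apply/orP; left; apply/eqP; congr (`|_|); ring.
  lra.
- have Bf := fin_ub (gen_fin gf); set B := fnorm f in Bf.
  have B0 : 0 <= B by apply: Bf; apply: norm_set0.
  set K := eps / (2 * (B + 1)).
  have K0 : 0 < K by rewrite /K divr_gt0 //; lra.
  have KB : K * (B + 1) = eps / 2 by rewrite /K; field; lra.
  pose del := Num.min 1 K.
  have del0 : 0 < del by rewrite lt_min ltr01 K0.
  have del1 : del <= 1 by rewrite ge_min lexx.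
  have del2 : del <= K by rewrite ge_min lexx orbT.
  have [q] := @rat_in_itvoo R (c - del) (c + del) (ltac:(lra)).
  rewrite in_itv /= => /andP [q1 q2].
  have [nc1 nc2] := nb c.
  set eps1 := eps / (2 * (`|c| + 1)).
  have e10 : 0 < eps1 by rewrite /eps1 divr_gt0 //; lra.
  have E1 : (`|c| + 1) * eps1 = eps / 2 by rewrite /eps1; field; lra.
  have [w1 [h1 [r1 [g1 u1]]]] := IHf eps1 e10.
  exists (w1 ++ [:: inr (pickle q).+2]), (fun s => ratr q * h1 s); split.
    by move=> stk; rewrite run_cat r1 /= pickleK.
  split; first exact: gs_scale.
  apply: ub_weak.
    apply: (ub_core (h1 := f) (h2 := fun s => f s - h1 s) (ltW del0)
      (addr_ge0 (normr_ge0 c) ler01) _ Bf u1).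
    move=> s.
    have -> : c * f s - ratr q * h1 s = (c - ratr q) * f s + ratr q * (f s - h1 s).
      by ring.
    apply: (le_trans (ler_normD _ _)); apply: lerD; rewrite normrM;
      apply: ler_wpM2r => //; rewrite ler_norml; apply/andP; split; lra.
  have h1' : del * B <= K * B by apply: ler_wpM2r.
  have h2' : K * B <= K * (B + 1) by apply: ler_wpM2l; [exact: ltW|lra].
  lra.
- have [w1 [h1 [r1 [g1 u1]]]] := IHf _ (divr_gt0 e0 (ltac:(lra) : (0:R) < 2)).
  have [w2 [h2 [r2 [g2 u2]]]] := IHg _ (divr_gt0 e0 (ltac:(lra) : (0:R) < 2)).
  exists (w1 ++ w2 ++ [:: inr 1%N]), (fun s => Num.max (h1 s) (h2 s)); split.
    by move=> stk; rewrite !run_cat r1 r2.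
  split; first exact: gs_max.
  apply: ub_weak; first apply: (ub_core ler01 ler01 _ u1 u2).
    by move=> s; rewrite !mul1r; apply: max_lip.
  lra.
Qed.

Variables (a b : L).

Definition clamp (h : F) : F := fun s =>
  Num.max (delta a s) ((-1) * Num.max ((-1) * h s) ((-1) * delta b s)).

Lemma clamp_gen h : gen h -> gen (clamp h).
Proof.
move=> gh; apply: (gs_max (f := delta a)); first exact: gs_delta.
apply: (@gs_scale _ _ _ (-1) (fun s => Num.max ((-1) * h s) ((-1) * delta b s))).
apply: (gs_max (f := fun s => (-1) * h s) (g := fun s => (-1) * delta b s)).
  exact: gs_scale.
by apply: gs_scale; apply: gs_delta.
Qed.

Lemma clamp_eq h s : clamp h s = Num.max (delta a s) (Num.min (h s) (delta b s)).
Proof. by rewrite /clamp negmax. Qed.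

Lemma fdecode_run w h : (forall stk, run w stk = h :: stk) -> fdecode w = h.
Proof. by move=> H; rewrite /fdecode H. Qed.

End Part2.

Section P2.
Context {d : Order.disp_t} (L : distrLatticeType d) (R : realType).
Local Notation F := (Lstar L R -> R).

Lemma part2 (a b : L) (ab : (a <= b)%O) : exists D : set F,
  dense_subset (FBL_interval a b) D /\ D #<= [set: (L + nat)%type].
Proof.
pose D : set F := [set k | exists w, gen_sublattice (fdecode (R:=R) w) /\
  k = clamp a b (fdecode (R:=R) w)].
exists D; split; [split|].
- move=> k [w [gw ->]]; split; first by apply: gen_FBL; apply: clamp_gen.
  by move=> s; rewrite clamp_eq; apply: clamp_in; apply: mono.
- move=> f [[hf [ff appf]] fI] eps e0.
  have [g [gg Hg]] := appf _ (divr_gt0 e0 (ltac:(lra) : (0:R) < 2)).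
  have [w [h [rw [gh uh]]]] := approx gg (divr_gt0 e0 (ltac:(lra) : (0:R) < 4)).
  have dw := fdecode_run rw.
  exists (clamp a b h); split; first by exists w; rewrite dw.
  have ufg := fin_ub (fin_sub ff (gen_fin gg)).
  apply: (le_lt_trans (fnorm_le (ub_core ler01 ler01 _ ufg uh))); last lra.
  move=> s; rewrite !mul1r clamp_eq.
  apply: le_trans; first by apply: clamp_lip; exact: fI.
  apply: (le_trans _ (ler_normD _ _)); rewrite le_eqVlt; apply/orP; left.
  by apply/eqP; congr (`|_|); rewrite addrA subrK.
- apply: (@card_le_trans _ _ _ [set: seq (L + nat)%type]); last exact: seq_le.
  apply: (@card_le_trans _ _ _ ((fun w => clamp a b (fdecode (R:=R) w)) @` [set: seq (L + nat)%type])).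
    by apply: subset_card_le => k [w [_ ->]]; exists w.
  exact: card_image_le.
Qed.

End P2.

Local Open Scope ring_scope.
Local Open Scope classical_set_scope.
Local Open Scope card_scope.
Unset Implicit Arguments.

Theorem mainTheorem5 {d : Order.disp_t} (L : distrLatticeType d) (R : realType)
    (a b : L) (hab : (a < b)%O) :
  (* max{aleph_0, |[a,b]_L|} <= dens([delta_a, delta_b]) *)
  (forall D : set (Lstar L R -> R),
     dense_subset (FBL_interval a b) D ->
     [set: nat] #<= D /\ [set x : L | (a <= x <= b)%O] #<= D) /\
  (* dens([delta_a, delta_b]) <= max{aleph_0, |L|} = |L + nat| *)
  (exists D : set (Lstar L R -> R),
     dense_subset (FBL_interval a b) D /\ D #<= [set: (L + nat)%type]).
Proof.
split.
  by move=> D HD; apply: part1.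
exact: part2 (ltW hab).
Qed.
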